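(* Let $A$ be a ring, $\mathcal C$ a coseparable $A$-coring with cointegral $\delta$, and $e\in\mathcal C^A$. Let $\mathbb X^{\mathcal C}_{\delta,e}$ be the supplemented S-category described in the context. A right $\mathcal C$-comodule $M$ is formally $\mathbb X^{\mathcal C}_{\delta,e}$-smooth if and only if the map $$\kappa_M:M\to M,\qquad m\mapsto \sum m_{(0)}\,\delta(e\otimes_A m_{(1)})$$ has a left inverse in $\mathrm{End}_A(M)$ (the ring of right $A$-module endomorphisms of $M$).
   Context: An $A$-coring $\mathcal C$ has coproduct $\Delta_{\mathcal C}(c)=\sum c_{(1)}\otimes_A c_{(2)}$ and counit $\varepsilon_{\mathcal C}$; right comodules $M$ have coaction $\varrho^M(m)=\sum m_{(0)}\otimes_A m_{(1)}$; $\mathfrak M^{\mathcal C}$ is the category of right $\mathcal C$-comodules, $\mathfrak M_A$ that of right $A$-modules. $\mathcal C$ is coseparable with cointegral $\delta$ if $\delta:\mathcal C\otimes_A\mathcal C\to A$ is an $(A,A)$-bimodule map with $\delta\circ\Delta_{\mathcal C}=\varepsilon_{\mathcal C}$ and $(\mathcal C\otimes_A\delta)\circ(\Delta_{\mathcal C}\otimes_A\mathcal C)=(\delta\otimes_A\mathcal C)\circ(\mathcal C\otimes_A\Delta_{\mathcal C})$. $\mathcal C^A=\{c\in\mathcal C: ac=ca\ \forall a\in A\}$. General definitions: an S-category is a pair of functors $u^*:\mathfrak X\to\bar{\mathfrak X}$, $u_*:\bar{\mathfrak X}\to\mathfrak X$ with $u^*\dashv u_*$ and a chosen natural left inverse $\nu$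 of the unit $\eta$; it is supplemented by a functor $u_!:\bar{\mathfrak X}\to\mathfrak X$ and natural transformation $\bar\eta:\mathrm{Id}\to u^*u_!$; one sets $r_y=\nu_{u_!(y)}\circ u_*(\bar\eta_y):u_*(y)\to u_!(y)$. An object $x\in\mathfrak X$ is formally $\mathbb X$-smooth if $\mathfrak X(x,r_y):g\mapsto r_y\circ g$ is surjective for all $y\in\bar{\mathfrak X}$, and formally $\mathbb X$-cosmooth if $\mathfrak X(r_y,x):g\mapsto g\circ r_y$ is surjective for all $y$. $\mathbb X^{\mathcal C}_{\delta,e}$: $\mathfrak X=\mathfrak M^{\mathcal C}$, $\bar{\mathfrak X}=\mathfrak M_A$, $u^*$ the forgetful functor, $u_*=-\otimes_A\mathcal C$ (right adjoint to $u^*$), $\nu_M:M\otimes_A\mathcal C\to M$, $m\otimes_A c\mapsto\sum m_{(0)}\delta(m_{(1)}\otimes_A c)$, $u_!=-\otimes_A\mathcal C$, $\bar\eta_N:N\to N\otimes_A\mathcal C$, $n\mapsto n\otimes_A e$. Thus for $N\in\mathfrak M_A$, $r_N:N\otimes_A\mathcal C\to N\otimes_A\mathcal C$, $n\otimes_A c\mapsto\sum n\otimes_A e_{(1)}\delta(e_{(2)}\otimes_A c)$. So $M$ is formally smooth iff for every right $A$-module $N$, $\mathrm{Hom}^{\mathcal C}(M,N\otimes_A\mathcal C)\to\mathrm{Hom}^{\mathcal C}(M,N\otimes_A\mathcal C)$, $g\mapsto r_N\circ g$, is surjective. *)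

(* Defs.v *)
(* Right A-modules are left modules over the converse ring A^c.
   Tensor products  N (x)_A C  are given by their universal property
   (record [tensor]); the main theorem quantifies over an arbitrary
   choice of such tensor products, one for every right A-module N. *)
From HB Require Import structures.
From mathcomp Require Import all_boot all_order all_algebra.
Set Implicit Arguments. Unset Strict Implicit. Unset Printing Implicit Defensive.
Import GRing.Theory.
Local Open Scope ring_scope.

Notation rmod A := (lmodType (GRing.converse A)).

Definition ract (A : pzRingType) (M : rmod A) (m : M) (a : A) : M :=
  (a : GRing.converse A) *: m.

Definition addmap (U V : zmodType) (f : U -> V) : Prop :=
  forall x y, f (x + y) = f x + f y.

Definition rlinear (A : pzRingType) (M N : rmod A) (f : M -> N) : Prop :=
  addmap f /\ forall m a, f (ract m a) = ract (f m) a.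

Record bimod (A : pzRingType) := Bimod {
  bm_sort :> rmod A;
  lact : A -> bm_sort -> bm_sort;
  lact1 : forall c, lact 1 c = c;
  lactM : forall a b c, lact (a * b) c = lact a (lact b c);
  lactDl : forall a b c, lact (a + b) c = lact a c + lact b c;
  lactDr : forall a c d, lact a (c + d) = lact a c + lact a d;
  lact_ract : forall a b c, lact a (ract c b) = ract (lact a c) b
}.

Definition balanced (A : pzRingType) (N : rmod A) (C : bimod A) (Z : zmodType)
  (f : N -> C -> Z) : Prop :=
  [/\ forall n n' c, f (n + n') c = f n c + f n' c,
      forall n c c', f n (c + c') = f n c + f n c'
    & forall n a c, f (ract n a) c = f n (lact a c)].

Record tensor (A : pzRingType) (N : rmod A) (C : bimod A) := Tensor {
  tsort :> rmod A;
  tens : N -> C -> tsort;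
  tens_balanced : balanced tens;
  tens_ract : forall n c a, ract (tens n c) a = tens n (ract c a);
  tlift : forall Z : zmodType, (N -> C -> Z) -> tsort -> Z;
  tlift_additive : forall (Z : zmodType) (f : N -> C -> Z),
      balanced f -> addmap (tlift f);
  tlift_tens : forall (Z : zmodType) (f : N -> C -> Z),
      balanced f -> forall n c, tlift f (tens n c) = f n c;
  tens_ext : forall (Z : zmodType) (g h : tsort -> Z), addmap g -> addmap h ->
      (forall n c, g (tens n c) = h (tens n c)) -> g = h
}.

Definition tensor_functor (A : pzRingType) (C : bimod A) :=
  forall N : rmod A, tensor N C.


Definition tlact (A : pzRingType) (C : bimod A) (tp : tensor_functor C)
  (a : A) : tp C -> tp C :=
  tlift (fun x y => tens (tp C) (lact a x) y).

Definition lassoc (A : pzRingType) (C : bimod A) (tp : tensor_functor C)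
  (N : rmod A) (n : N) : tp C -> tp (tp N) :=
  tlift (fun x y => tens (tp (tp N)) (tens (tp N) n x) y).

Definition idDelta (A : pzRingType) (C : bimod A) (tp : tensor_functor C)
  (Delta : C -> tp C) (N : rmod A) : tp N -> tp (tp N) :=
  tlift (fun n c => lassoc n (Delta c)).

Definition is_coring (A : pzRingType) (C : bimod A) (tp : tensor_functor C)
  (Delta : C -> tp C) (eps : C -> A) : Prop :=
  [/\ rlinear Delta /\ (forall a c, Delta (lact a c) = tlact a (Delta c)),
      (addmap eps /\ forall a c, eps (lact a c) = a * eps c)
        /\ (forall c a, eps (ract c a) = eps c * a),
      forall c, tlift (fun x y => tens (tp (tp C)) (Delta x) y) (Delta c)
                = idDelta Delta (Delta c),
      forall c, tlift (fun x y => lact (eps x) y) (Delta c) = c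
    &
      forall c, tlift (fun x y => ract x (eps y)) (Delta c) = c].

Definition is_cointegral (A : pzRingType) (C : bimod A) (tp : tensor_functor C)
  (Delta : C -> tp C) (eps : C -> A) (delta : tp C -> A) : Prop :=
  [/\ addmap delta,
      forall a w, delta (tlact a w) = a * delta w,
      forall w a, delta (ract w a) = delta w * a,
      forall c, delta (Delta c) = eps c
    & (* (C (x) delta) o (Delta (x) C) = (delta (x) C) o (C (x) Delta)
         as maps C (x) C -> C, evaluated on x (x) y *)
      forall x y,
        tlift (fun c u => ract c (delta (tens (tp C) u y))) (Delta x)
        = tlift (fun u v => lact (delta (tens (tp C) x u)) v) (Delta y)].

Definition is_comodule (A : pzRingType) (C : bimod A) (tp : tensor_functor C)
  (Delta : C -> tp C) (eps : C -> A) (M : rmod A) (rho : M -> tp M) : Prop :=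
  [/\ rlinear rho,
      forall m, tlift (fun u c => tens (tp (tp M)) (rho u) c) (rho m)
                = idDelta Delta (rho m)
    &
      forall m, tlift (fun u c => ract u (eps c)) (rho m) = m].

Definition comod_hom (A : pzRingType) (C : bimod A) (tp : tensor_functor C)
  (M N : rmod A) (rhoM : M -> tp M) (rhoN : N -> tp N) (f : M -> N) : Prop :=
  rlinear f /\
  forall m, rhoN (f m) = tlift (fun u c => tens (tp N) (f u) c) (rhoM m).

Definition r_map (A : pzRingType) (C : bimod A) (tp : tensor_functor C)
  (Delta : C -> tp C) (delta : tp C -> A) (e : C) (N : rmod A) : tp N -> tp N :=
  tlift (fun n c => tens (tp N) n
           (tlift (fun u v => ract u (delta (tens (tp C) v c))) (Delta e))).

Definition formally_smooth (A : pzRingType) (C : bimod A) (tp : tensor_functor C)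
  (Delta : C -> tp C) (delta : tp C -> A) (e : C)
  (M : rmod A) (rho : M -> tp M) : Prop :=
  forall (N : rmod A) (g : M -> tp N),
    comod_hom rho (idDelta Delta (N:=N)) g ->
    exists h : M -> tp N,
      comod_hom rho (idDelta Delta (N:=N)) h /\
      (forall m, r_map Delta delta e (h m) = g m).

Definition kappa (A : pzRingType) (C : bimod A) (tp : tensor_functor C)
  (delta : tp C -> A) (e : C) (M : rmod A) (rho : M -> tp M) : M -> M :=
  fun m => tlift (fun u c => ract u (delta (tens (tp C) e c))) (rho m).

(* Main.v *)
Require Import Defs.
From HB Require Import structures.
From mathcomp Require Import all_boot all_order all_algebra.
From Stdlib Require Import FunctionalExtensionality.
Set Implicit Arguments. Unset Strict Implicit. Unset Printing Implicit Defensive.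
Import GRing.Theory.
Local Open Scope ring_scope.

Lemma ractDl (A : pzRingType) (M : rmod A) (x y : M) a : ract (x + y) a = ract x a + ract y a.
Proof. by rewrite /ract scalerDr. Qed.
Lemma ractDr (A : pzRingType) (M : rmod A) (x : M) a b : ract x (a + b) = ract x a + ract x b.
Proof. by rewrite /ract scalerDl. Qed.
Lemma ractA (A : pzRingType) (M : rmod A) (x : M) a b : ract (ract x a) b = ract x (a * b).
Proof. by rewrite /ract scalerA. Qed.


Lemma tensDl (A : pzRingType) (N : rmod A) (C : bimod A) (t : tensor N C) n n' c :
  tens t (n + n') c = tens t n c + tens t n' c.
Proof. by case: (tens_balanced t). Qed.
Lemma tensDr (A : pzRingType) (N : rmod A) (C : bimod A) (t : tensor N C) n c c' :
  tens t n (c + c') = tens t n c + tens t n c'.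
Proof. by case: (tens_balanced t). Qed.
Lemma tens_ractl (A : pzRingType) (N : rmod A) (C : bimod A) (t : tensor N C) n a c :
  tens t (ract n a) c = tens t n (lact a c).
Proof. by case: (tens_balanced t). Qed.

Lemma balanced_comp (A : pzRingType) (N : rmod A) (C : bimod A) (Z Z' : zmodType)
  (F : N -> C -> Z) (k : Z -> Z') :
  addmap k -> balanced F -> balanced (fun n c => k (F n c)).
Proof.
move=> hk [h1 h2 h3]; split=> *; by rewrite ?h1 ?h2 ?h3 ?hk.
Qed.

Lemma tlift_morph (A : pzRingType) (N : rmod A) (C : bimod A) (t : tensor N C)
  (Z Z' : zmodType) (F : N -> C -> Z) (k : Z -> Z') :
  addmap k -> balanced F -> forall w, k (tlift (t:=t) F w) = tlift (t:=t) (fun n c => k (F n c)) w.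
Proof.
move=> hk hF w.
have hkF := balanced_comp hk hF.
suff E : (fun w => k (tlift (t:=t) F w)) = tlift (t:=t) (fun n c => k (F n c)) by exact: (congr1 (fun h => h w) E).
apply: tens_ext.
- by move=> x y; rewrite (tlift_additive hF) hk.
- exact: tlift_additive.
- by move=> n c; rewrite !tlift_tens.
Qed.

Lemma tlift_ract (A : pzRingType) (N : rmod A) (C : bimod A) (t : tensor N C)
  (M : rmod A) (F : N -> C -> M) :
  balanced F -> (forall n c a, F n (ract c a) = ract (F n c) a) ->
  rlinear (tlift (t:=t) F).
Proof.
move=> hF hr; split; first exact: tlift_additive.
move=> w a.
suff E : (fun w => tlift (t:=t) F (ract w a)) = (fun w => ract (tlift (t:=t) F w) a) by exact: (congr1 (fun h => h w) E).
apply: tens_ext.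
- by move=> x y; rewrite ractDl (tlift_additive hF).
- by move=> x y; rewrite (tlift_additive hF) ractDl.
- by move=> n c; rewrite tens_ract !tlift_tens.
Qed.

Lemma tlift_addf (A : pzRingType) (N : rmod A) (C : bimod A) (t : tensor N C)
  (Z : zmodType) (F G : N -> C -> Z) :
  balanced F -> balanced G -> forall w,
  tlift (t:=t) (fun n c => F n c + G n c) w = tlift (t:=t) F w + tlift (t:=t) G w.
Proof.
move=> hF hG w.
have hFG : balanced (fun n c => F n c + G n c).
  case: hF hG => [f1 f2 f3] [g1 g2 g3].
  split=> [n n' c|n c c'|n a c]; [by rewrite f1 g1 addrACA|by rewrite f2 g2 addrACA|by rewrite f3 g3].
suff E : tlift (t:=t) (fun n c => F n c + G n c) = (fun w => tlift (t:=t) F w + tlift (t:=t) G w) by exact: (congr1 (fun h => h w) E).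
apply: tens_ext.
- exact: tlift_additive.
- move=> x y; rewrite (tlift_additive hF) (tlift_additive hG).
  by rewrite addrACA.
- by move=> n c; rewrite !tlift_tens.
Qed.

Definition Tm (A : pzRingType) (C : bimod A) (N N' : rmod A) (t : tensor N C) (t' : tensor N' C)
  (k : N -> N') : t -> t' := tlift (t:=t) (fun u c => tens t' (k u) c).
Arguments Tm {A C N N'} t t' k _.

Lemma bal_T (A : pzRingType) (C : bimod A) (N N' : rmod A) (t' : tensor N' C) (k : N -> N') :
  rlinear k -> balanced (fun u (c : C) => tens t' (k u) c).
Proof.
move=> [k1 k2]; split=> [n n' c|n c c'|n a c].
- by rewrite k1 tensDl.
- by rewrite tensDr.
- by rewrite k2 tens_ractl.
Qed.

Lemma T_tens (A : pzRingType) (C : bimod A) (N N' : rmod A) (t : tensor N C) (t' : tensor N' C)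
  (k : N -> N') : rlinear k -> forall u c, Tm t t' k (tens t u c) = tens t' (k u) c.
Proof. by move=> hk u c; rewrite /Tm tlift_tens //; apply: bal_T. Qed.

Lemma T_rlinear (A : pzRingType) (C : bimod A) (N N' : rmod A) (t : tensor N C) (t' : tensor N' C)
  (k : N -> N') : rlinear k -> rlinear (Tm t t' k).
Proof.
move=> hk; apply: tlift_ract; first exact: bal_T.
by move=> n c a; rewrite tens_ract.
Qed.

Lemma T_add (A : pzRingType) (C : bimod A) (N N' : rmod A) (t : tensor N C) (t' : tensor N' C)
  (k : N -> N') : rlinear k -> addmap (Tm t t' k).
Proof. by move=> hk; case: (T_rlinear t t' hk). Qed.

Lemma tlift_T (A : pzRingType) (C : bimod A) (N N' : rmod A) (t : tensor N C) (t' : tensor N' C)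
  (k : N -> N') (Z : zmodType) (H : N' -> C -> Z) :
  rlinear k -> balanced H ->
  forall w, tlift H (Tm t t' k w) = tlift (t:=t) (fun u v => H (k u) v) w.
Proof.
move=> hk hH w.
have hHk : balanced (fun u v => H (k u) v).
  case: hH hk => [h1 h2 h3] [k1 k2].
  split=> [n n' c|n c c'|n a c]; [by rewrite k1 h1|by rewrite h2|by rewrite k2 h3].
suff E : (fun w => tlift H (Tm t t' k w)) = tlift (t:=t) (fun u v => H (k u) v)
  by exact: (congr1 (fun h => h w) E).
apply: tens_ext.
- by move=> x y; rewrite (@T_add _ _ _ _ t t' k hk) (tlift_additive hH).
- exact: tlift_additive.
- by move=> n c; rewrite T_tens // !tlift_tens.
Qed.

Lemma T_comp (A : pzRingType) (C : bimod A) (N N' N'' : rmod A) (t : tensor N C) (t' : tensor N' C)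
  (t'' : tensor N'' C) (k : N -> N') (k' : N' -> N'') :
  rlinear k -> rlinear k' ->
  forall w, Tm t' t'' k' (Tm t t' k w) = Tm t t'' (fun x => k' (k x)) w.
Proof. move=> hk hk' w; rewrite /Tm [LHS]tlift_T //; exact: bal_T. Qed.

Lemma rlinear_comp (A : pzRingType) (N N' N'' : rmod A) (k : N -> N') (k' : N' -> N'') :
  rlinear k -> rlinear k' -> rlinear (fun x => k' (k x)).
Proof. by move=> [k1 k2] [l1 l2]; split=> [x y|x a]; rewrite ?k1 ?l1 ?k2 ?l2. Qed.

Lemma tens_rlinear (A : pzRingType) (C : bimod A) (N : rmod A) (t : tensor N C) (n : N) :
  rlinear (tens t n : C -> t).
Proof. by split=> [x y|x a]; rewrite ?tensDr ?tens_ract. Qed.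

Lemma lact_rlinear (A : pzRingType) (C : bimod A) (a : A) : rlinear (lact a : C -> C).
Proof. by split=> [x y|x b]; rewrite ?lactDr ?lact_ract. Qed.

Lemma lassoc_add (A : pzRingType) (C : bimod A) (tp : tensor_functor C) (N : rmod A) (n n' : N) w :
  lassoc (tp:=tp) (n + n') w = lassoc (tp:=tp) n w + lassoc (tp:=tp) n' w.
Proof.
rewrite /lassoc -tlift_addf; try exact: (bal_T _ (tens_rlinear _ _)).
congr tlift; apply: functional_extensionality => x; apply: functional_extensionality => y.
by rewrite tensDl tensDl.
Qed.

Lemma lassoc_ract (A : pzRingType) (C : bimod A) (tp : tensor_functor C) (N : rmod A) (n : N) a w :
  lassoc (tp:=tp) (ract n a) w = lassoc (tp:=tp) n (tlact a w).
Proof.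
rewrite /lassoc /tlact.
change (Tm (tp C) (tp (tp N)) (tens (tp N) (ract n a)) w =
  Tm (tp C) (tp (tp N)) (tens (tp N) n) (Tm (tp C) (tp C) (lact a) w)).
rewrite T_comp; last (exact: tens_rlinear); last (exact: lact_rlinear).
congr Tm; apply: functional_extensionality => x; exact: tens_ractl.
Qed.

Lemma bal_D (A : pzRingType) (C : bimod A) (tp : tensor_functor C) (Delta : C -> tp C)
  (HD : rlinear Delta) (HDl : forall a c, Delta (lact a c) = tlact a (Delta c)) (N : rmod A) :
  balanced (fun (n : N) c => lassoc (tp:=tp) n (Delta c)).
Proof.
split=> [n n' c|n c c'|n a c].
- exact: lassoc_add.
- rewrite (proj1 HD); exact: (@T_add _ _ _ _ (tp C) (tp (tp N)) _ (tens_rlinear _ n)).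
- by rewrite lassoc_ract HDl.
Qed.

Lemma ext_pt (A : pzRingType) (N : rmod A) (C : bimod A) (t : tensor N C) (Z : zmodType)
  (g h : t -> Z) : addmap g -> addmap h -> (forall n c, g (tens t n c) = h (tens t n c)) ->
  forall w, g w = h w.
Proof. by move=> hg hh E w; rewrite (tens_ext hg hh E). Qed.

Lemma addmap_comp (U V W : zmodType) (f : U -> V) (g : V -> W) :
  addmap f -> addmap g -> addmap (fun x => g (f x)).
Proof. by move=> hf hg x y; rewrite hf hg. Qed.

Lemma D_T (A : pzRingType) (C : bimod A) (tp : tensor_functor C) (Delta : C -> tp C)
  (HD : rlinear Delta) (HDl : forall a c, Delta (lact a c) = tlact a (Delta c)) (N N' : rmod A)
  (k : N -> N') : rlinear k -> forall x,
  idDelta Delta (Tm (tp N) (tp N') k x) =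
  Tm (tp (tp N)) (tp (tp N')) (Tm (tp N) (tp N') k) (idDelta Delta x).
Proof.
move=> hk x.
rewrite /idDelta tlift_T //; last exact: bal_D.
rewrite tlift_morph; last exact: bal_D; last exact: T_add (T_rlinear _ _ hk).
congr tlift; apply: functional_extensionality => n; apply: functional_extensionality => c.
rewrite /lassoc.
change (Tm (tp C) (tp (tp N')) (tens (tp N') (k n)) (Delta c) =
  Tm (tp (tp N)) (tp (tp N')) (Tm (tp N) (tp N') k) (Tm (tp C) (tp (tp N)) (tens (tp N) n) (Delta c))).
rewrite T_comp; last (exact: T_rlinear); last (exact: tens_rlinear).
congr Tm; apply: functional_extensionality => y; by rewrite T_tens.
Qed.

Definition Eps (A : pzRingType) (C : bimod A) (tp : tensor_functor C) (eps : C -> A) (N : rmod A)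
  : tp N -> N := tlift (fun u c => ract u (eps c)).
Arguments Eps {A C} tp eps {N} _.

Definition eps_ok (A : pzRingType) (C : bimod A) (eps : C -> A) :=
  (addmap eps /\ forall a c, eps (lact a c) = a * eps c) /\ (forall c a, eps (ract c a) = eps c * a).

Lemma bal_E (A : pzRingType) (C : bimod A) (eps : C -> A) (N : rmod A) :
  eps_ok eps -> balanced (fun (u : N) (c : C) => ract u (eps c)).
Proof.
move=> [[e1 e2] e3]; split=> [n n' c|n c c'|n a c].
- exact: ractDl.
- by rewrite e1 ractDr.
- by rewrite e2 ractA.
Qed.

Lemma E_rlinear (A : pzRingType) (C : bimod A) (tp : tensor_functor C) (eps : C -> A) (N : rmod A) :
  eps_ok eps -> rlinear (Eps tp eps (N:=N)).
Proof.
move=> he; apply: tlift_ract; first exact: bal_E.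
by move=> n c a; case: he => _ e3; rewrite e3 ractA.
Qed.

Lemma E_T (A : pzRingType) (C : bimod A) (tp : tensor_functor C) (eps : C -> A) (N N' : rmod A)
  (k : N -> N') : eps_ok eps -> rlinear k ->
  forall x, Eps tp eps (Tm (tp N) (tp N') k x) = k (Eps tp eps x).
Proof.
move=> he hk x; rewrite /Eps tlift_T //; last exact: bal_E.
rewrite tlift_morph //; last exact: bal_E; last by case: hk.
congr tlift; apply: functional_extensionality => n; apply: functional_extensionality => c.
by case: hk => _ ->.
Qed.

Lemma bal_lacteps (A : pzRingType) (C : bimod A) (eps : C -> A) :
  eps_ok eps -> balanced (fun (u : C) (c : C) => lact (eps u) c).
Proof.
move=> [[e1 e2] e3]; split=> [n n' c|n c c'|n a c].
- by rewrite e1 lactDl.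
- by rewrite lactDr.
- by rewrite e3 lactM.
Qed.

Lemma E_D (A : pzRingType) (C : bimod A) (tp : tensor_functor C) (Delta : C -> tp C) (eps : C -> A)
  (HD : rlinear Delta) (HDl : forall a c, Delta (lact a c) = tlact a (Delta c))
  (he : eps_ok eps) (Hcu : forall c, tlift (fun x y => lact (eps x) y) (Delta c) = c)
  (N : rmod A) (x : tp N) :
  Tm (tp (tp N)) (tp N) (Eps tp eps) (idDelta Delta x) = x.
Proof.
have hE : rlinear (Eps tp eps (N:=N)) := @E_rlinear _ _ tp eps N he.
apply: (ext_pt (g := fun x => Tm (tp (tp N)) (tp N) (Eps tp eps) (idDelta Delta x)) (h := id)).
- apply: addmap_comp; first exact: (tlift_additive (bal_D HD HDl N)).
  exact: T_add.
- by [].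
move=> n c; rewrite /idDelta tlift_tens; last exact: bal_D.
rewrite /lassoc.
change (Tm (tp (tp N)) (tp N) (Eps tp eps) (Tm (tp C) (tp (tp N)) (tens (tp N) n) (Delta c)) = tens (tp N) n c).
rewrite T_comp //; last exact: tens_rlinear.
rewrite /Tm.
have -> : (fun (u : C) (c0 : C) => tens (tp N) (Eps tp eps (tens (tp N) n u)) c0) =
   (fun u c0 => tens (tp N) n (lact (eps u) c0)).
  apply: functional_extensionality => u; apply: functional_extensionality => c0.
  by rewrite /Eps tlift_tens ?tens_ractl //; apply: bal_E.
rewrite -tlift_morph; first by rewrite Hcu.
- by case: (tens_rlinear (tp N) n).
- exact: bal_lacteps.
Qed.

Lemma comod_decomp (A : pzRingType) (C : bimod A) (tp : tensor_functor C) (Delta : C -> tp C) (eps : C -> A)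
  (HD : rlinear Delta) (HDl : forall a c, Delta (lact a c) = tlact a (Delta c))
  (he : eps_ok eps) (Hcu : forall c, tlift (fun x y => lact (eps x) y) (Delta c) = c)
  (M N : rmod A) (rho : M -> tp M) (g : M -> tp N) :
  comod_hom rho (idDelta Delta (N:=N)) g ->
  forall m, g m = Tm (tp M) (tp N) (fun x => Eps tp eps (g x)) (rho m).
Proof.
move=> [hg Hg] m.
rewrite -{1}(E_D HD HDl he Hcu (g m)) Hg.
change (Tm (tp (tp N)) (tp N) (Eps tp eps) (Tm (tp M) (tp (tp N)) g (rho m)) =
  Tm (tp M) (tp N) (fun x : M => Eps tp eps (g x)) (rho m)).
rewrite T_comp //; exact: E_rlinear.
Qed.

Lemma comod_T (A : pzRingType) (C : bimod A) (tp : tensor_functor C) (Delta : C -> tp C)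
  (HD : rlinear Delta) (HDl : forall a c, Delta (lact a c) = tlact a (Delta c))
  (M N : rmod A) (rho : M -> tp M) (hrho : rlinear rho)
  (Hco : forall m, tlift (fun u c => tens (tp (tp M)) (rho u) c) (rho m) = idDelta Delta (rho m))
  (k : M -> N) : rlinear k ->
  comod_hom rho (idDelta Delta (N:=N)) (fun m => Tm (tp M) (tp N) k (rho m)).
Proof.
move=> hk; split.
  apply: rlinear_comp => //; exact: T_rlinear.
move=> m; rewrite D_T // -Hco.
change (Tm (tp (tp M)) (tp (tp N)) (Tm (tp M) (tp N) k) (Tm (tp M) (tp (tp M)) rho (rho m)) =
  Tm (tp M) (tp (tp N)) (fun m => Tm (tp M) (tp N) k (rho m)) (rho m)).
rewrite T_comp //; exact: T_rlinear.
Qed.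

Definition delta_ok (A : pzRingType) (C : bimod A) (tp : tensor_functor C) (delta : tp C -> A) :=
  [/\ addmap delta, forall a w, delta (tlact a w) = a * delta w
    & forall w a, delta (ract w a) = delta w * a].

Definition Sf (A : pzRingType) (C : bimod A) (tp : tensor_functor C) (Delta : C -> tp C)
  (delta : tp C -> A) (e : C) (c : C) : C :=
  tlift (fun u v => lact (delta (tens (tp C) e u)) v) (Delta c).

Lemma bal_H (A : pzRingType) (C : bimod A) (tp : tensor_functor C) (delta : tp C -> A) (e : C) :
  delta_ok delta -> balanced (fun u v : C => lact (delta (tens (tp C) e u)) v).
Proof.
move=> [d1 d2 d3]; split=> [n n' c|n c c'|n a c].
- by rewrite tensDr d1 lactDl.
- by rewrite lactDr.
- by rewrite -tens_ract d3 lactM.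
Qed.

Lemma Sf_add (A : pzRingType) (C : bimod A) (tp : tensor_functor C) (Delta : C -> tp C)
  (delta : tp C -> A) (e : C) (HD : rlinear Delta) (hd : delta_ok delta) :
  addmap (Sf Delta delta e).
Proof.
move=> c c'; rewrite /Sf (proj1 HD); exact: (tlift_additive (bal_H e hd)).
Qed.

Lemma tlact_tens (A : pzRingType) (C : bimod A) (tp : tensor_functor C) a (x y : C) :
  tlact (tp:=tp) a (tens (tp C) x y) = tens (tp C) (lact a x) y.
Proof. rewrite /tlact tlift_tens //; apply: bal_T; exact: lact_rlinear. Qed.

Lemma Sf_lact (A : pzRingType) (C : bimod A) (tp : tensor_functor C) (Delta : C -> tp C)
  (delta : tp C -> A) (e : C) (HD : rlinear Delta)
  (HDl : forall a c, Delta (lact a c) = tlact a (Delta c)) (hd : delta_ok delta)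
  (He : forall a : A, lact a e = ract e a) a c :
  Sf Delta delta e (lact a c) = lact a (Sf Delta delta e c).
Proof.
rewrite /Sf HDl.
change (tlift (fun u v : C => lact (delta (tens (tp C) e u)) v) (Tm (tp C) (tp C) (lact a) (Delta c)) =
  lact a (tlift (fun u v : C => lact (delta (tens (tp C) e u)) v) (Delta c))).
rewrite (@tlift_T _ _ _ _ (tp C) (tp C) (lact a) _ _ (@lact_rlinear _ C a) (@bal_H _ C tp delta e hd)).
have hla : addmap (lact a : C -> C) by move=> x y; rewrite lactDr.
rewrite (tlift_morph hla (@bal_H _ C tp delta e hd)).
congr tlift; apply: functional_extensionality => u; apply: functional_extensionality => v.
case: hd => _ d2 _.
by rewrite -tens_ractl -He -tlact_tens d2 lactM.
Qed.

Lemma bal_s (A : pzRingType) (C : bimod A) (N : rmod A) (t : tensor N C) (s : C -> C) :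
  addmap s -> (forall a c, s (lact a c) = lact a (s c)) -> balanced (fun n c => tens t n (s c)).
Proof.
move=> h1 h2; split=> [n n' c|n c c'|n a c].
- exact: tensDl.
- by rewrite h1 tensDr.
- by rewrite h2 tens_ractl.
Qed.

Lemma r_eq (A : pzRingType) (C : bimod A) (tp : tensor_functor C) (Delta : C -> tp C)
  (delta : tp C -> A) (e : C)
  (Hint : forall x y,
        tlift (fun c u => ract c (delta (tens (tp C) u y))) (Delta x)
        = tlift (fun u v => lact (delta (tens (tp C) x u)) v) (Delta y))
  (N : rmod A) (x : tp N) :
  r_map Delta delta e x = tlift (fun n c => tens (tp N) n (Sf Delta delta e c)) x.
Proof.
rewrite /r_map; congr tlift; apply: functional_extensionality => n; apply: functional_extensionality => c.
by rewrite Hint.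
Qed.

Lemma r_T (A : pzRingType) (C : bimod A) (tp : tensor_functor C) (Delta : C -> tp C)
  (delta : tp C -> A) (e : C) (HD : rlinear Delta)
  (HDl : forall a c, Delta (lact a c) = tlact a (Delta c)) (hd : delta_ok delta)
  (He : forall a : A, lact a e = ract e a)
  (Hint : forall x y,
        tlift (fun c u => ract c (delta (tens (tp C) u y))) (Delta x)
        = tlift (fun u v => lact (delta (tens (tp C) x u)) v) (Delta y))
  (N N' : rmod A) (k : N -> N') (hk : rlinear k) (x : tp N) :
  r_map Delta delta e (Tm (tp N) (tp N') k x) = Tm (tp N) (tp N') k (r_map Delta delta e x).
Proof.
have hS1 := Sf_add e HD hd.
have hS2 := Sf_lact HD HDl hd He.
rewrite !r_eq //.
rewrite (@tlift_T _ _ _ _ (tp N) (tp N') k _ _ hk (bal_s (tp N') hS1 hS2)).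
rewrite (tlift_morph (@T_add _ _ _ _ (tp N) (tp N') k hk) (bal_s (tp N) hS1 hS2)).
congr tlift; apply: functional_extensionality => n; apply: functional_extensionality => c.
by rewrite T_tens.
Qed.

Definition Kf (A : pzRingType) (C : bimod A) (tp : tensor_functor C) (delta : tp C -> A) (e : C)
  (M : rmod A) : tp M -> M := tlift (fun u c => ract u (delta (tens (tp C) e c))).
Arguments Kf {A C tp} delta e {M} _.

Lemma bal_K (A : pzRingType) (C : bimod A) (tp : tensor_functor C) (delta : tp C -> A) (e : C)
  (hd : delta_ok delta) (He : forall a : A, lact a e = ract e a) (M : rmod A) :
  balanced (fun (u : M) (c : C) => ract u (delta (tens (tp C) e c))).
Proof.
case: hd => d1 d2 d3; split=> [n n' c|n c c'|n a c].
- exact: ractDl.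
- by rewrite tensDr d1 ractDr.
- by rewrite -tens_ractl -He -tlact_tens d2 ractA.
Qed.

Lemma K_rlinear (A : pzRingType) (C : bimod A) (tp : tensor_functor C) (delta : tp C -> A) (e : C)
  (hd : delta_ok delta) (He : forall a : A, lact a e = ract e a) (M : rmod A) :
  rlinear (Kf delta e (M:=M)).
Proof.
apply: (tlift_ract (tp M) (bal_K hd He M)).
move=> n c a; case: hd => _ _ d3.
by rewrite -tens_ract d3 ractA.
Qed.

Lemma key_id (A : pzRingType) (C : bimod A) (tp : tensor_functor C) (Delta : C -> tp C)
  (delta : tp C -> A) (e : C) (HD : rlinear Delta)
  (HDl : forall a c, Delta (lact a c) = tlact a (Delta c)) (hd : delta_ok delta)
  (He : forall a : A, lact a e = ract e a)
  (Hint : forall x y,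
        tlift (fun c u => ract c (delta (tens (tp C) u y))) (Delta x)
        = tlift (fun u v => lact (delta (tens (tp C) x u)) v) (Delta y))
  (M : rmod A) (rho : M -> tp M) (hrho : rlinear rho)
  (Hco : forall m, tlift (fun u c => tens (tp (tp M)) (rho u) c) (rho m) = idDelta Delta (rho m))
  (m : M) :
  r_map Delta delta e (rho m) = Tm (tp M) (tp M) (kappa delta e rho) (rho m).
Proof.
have hK := K_rlinear hd He M.
rewrite r_eq //.
have -> : (fun (n : M) c => tens (tp M) n (Sf Delta delta e c)) =
   (fun n c => Tm (tp (tp M)) (tp M) (Kf delta e) (lassoc (tp:=tp) n (Delta c))).
  apply: functional_extensionality => n; apply: functional_extensionality => c.
  rewrite /lassoc.
  change (tens (tp M) n (Sf Delta delta e c) =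
    Tm (tp (tp M)) (tp M) (Kf delta e) (Tm (tp C) (tp (tp M)) (tens (tp M) n) (Delta c))).
  rewrite T_comp //; last exact: tens_rlinear.
  rewrite /Tm.
  have -> : (fun (u : C) (c0 : C) => tens (tp M) (Kf delta e (tens (tp M) n u)) c0) =
      (fun u c0 => tens (tp M) n (lact (delta (tens (tp C) e u)) c0)).
    apply: functional_extensionality => u; apply: functional_extensionality => c0.
    by rewrite /Kf tlift_tens ?tens_ractl //; exact: (bal_K hd He M).
  rewrite /Sf (tlift_morph (proj1 (tens_rlinear (tp M) n)) (@bal_H _ C tp delta e hd)).
  by [].
rewrite -(tlift_morph (@T_add _ _ _ _ (tp (tp M)) (tp M) _ hK) (bal_D HD HDl M)).
change (Tm (tp (tp M)) (tp M) (Kf delta e) (idDelta Delta (rho m)) =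
   Tm (tp M) (tp M) (kappa delta e rho) (rho m)).
rewrite -Hco.
change (Tm (tp (tp M)) (tp M) (Kf delta e) (Tm (tp M) (tp (tp M)) rho (rho m)) =
   Tm (tp M) (tp M) (kappa delta e rho) (rho m)).
by rewrite T_comp.
Qed.

Theorem proposition4p5 (A : pzRingType) (C : bimod A) (tp : tensor_functor C)
  (Delta : C -> tp C) (eps : C -> A) (delta : tp C -> A) (e : C)
  (HC : is_coring Delta eps)
  (Hdelta : is_cointegral Delta eps delta)
  (He : forall a : A, lact a e = ract e a)
  (M : rmod A) (rho : M -> tp M) (HM : is_comodule Delta eps rho) :
  formally_smooth Delta delta e rho <->
  exists phi : M -> M, rlinear phi /\ forall m, phi (kappa delta e rho m) = m.
Proof.
case: HC => [[HD HDl] he _ Hcu _].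
case: Hdelta => [d1 d2 d3 _ Hint].
have hd : delta_ok delta by split.
case: HM => [hrho Hco HMcu].
have hkap : rlinear (kappa delta e rho) := rlinear_comp hrho (K_rlinear hd He M).
split.
- move=> Hs.
  have hg : comod_hom rho (idDelta Delta (N:=M)) rho by split=> // m; rewrite Hco.
  have [h [hh Hr]] := Hs M rho hg.
  exists (fun x => Eps tp eps (h x)); split.
    apply: rlinear_comp; first by case: hh.
    exact: E_rlinear.
  move=> m.
  have Hdec := comod_decomp HD HDl he Hcu hh.
  have hphi : rlinear (fun x => Eps tp eps (h x)).
    apply: rlinear_comp; first by case: hh.
    exact: E_rlinear.
  transitivity (Eps tp eps (rho m)); last exact: HMcu.
  rewrite -(Hr m) (Hdec m) r_T // key_id // T_comp // E_T //; first by rewrite /Eps HMcu.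
  exact: (rlinear_comp hkap hphi).
- move=> [phi [hphi Hphi]] N g hg.
  have hf : rlinear (fun x => Eps tp eps (g x)).
    apply: rlinear_comp; first by case: hg.
    exact: E_rlinear.
  have hk := rlinear_comp hphi hf.
  exists (fun m => Tm (tp M) (tp N) (fun x => Eps tp eps (g (phi x))) (rho m)); split.
    exact: comod_T.
  move=> m.
  rewrite r_T // key_id // T_comp // (comod_decomp HD HDl he Hcu hg m).
  congr Tm; apply: functional_extensionality => x.
  by rewrite Hphi.
Qed.
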